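(* Assume (A1)–(A4) and $\eta_x,\eta_z>0$ (see context). Then the iterates of the Jacobi scheme satisfy, for all $k\ge1$, $$\Phi^{k-1}\ge\Phi^k\ge\hat\Phi.$$
   Context: Let $T\ge1$, $[T]=\{1,\dots,T\}$; for $t\in[T]$: $X_t\subseteq\mathbb{R}^{n_t}$, $f_t:\mathbb{R}^{n_t}\to\mathbb{R}$, $A_t\in\mathbb{R}^{m\times n_t}$; $b\in\mathbb{R}^m$; $X=\prod_tX_t$, $A=[A_1\cdots A_T]$, $Ax=\sum_tA_tx_t$, $A_{\neq t}x_{\neq t}=\sum_{s\neq t}A_sx_s$; $\|w\|_M=\sqrt{w^\top Mw}$. Assumptions: (A1) $X_t$ nonempty compact; (A2) $f_t$ is $C^2$; (A3) $A$ full row rank; (A4) $\{x\in X:Ax=b\}\neq\emptyset$. Parameters $\rho,\theta,\tau_x,\tau_z>0$ with $\eta_x:=\frac{\tau_x}{4}-\frac{(T-1)\rho}{2}>0$, $\eta_z:=\frac{\tau_z}{4}-\frac{2(\theta+\tau_z)^2}{\rho}>0$. $\mathcal{L}(x,z,\lambda)=\sum_tf_t(x_t)+\frac{\theta}{2}\|z\|^2+\lambda^\top(Ax+z-b)+\frac{\rho}{2}\|Ax+z-b\|^2$. Jacobi scheme: given $x^0\in X$, $z^0,\lambda^0\in\mathbb{R}^m$, for $k\ge1$: (i) for each $t$, $x_t^k$ is a local minimizer, computed by a solver warm-started at $x_t^{k-1}$ (so that its subproblem objective does not exceed that of $x_t^{k-1}$), of $\min_{x_t\in X_t}f_t(x_t)+(\lambda^{k-1})^\top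 A_tx_t+\frac{\rho}{2}\|A_tx_t+A_{\neq t}x^{k-1}_{\neq t}+z^{k-1}-b\|^2+\frac{\tau_x}{2}\|x_t-x_t^{k-1}\|^2_{A_t^\top A_t}$; (ii) $z^k=(\tau_zz^{k-1}-\rho(Ax^k-b)-\lambda^{k-1})/(\tau_z+\rho+\theta)$; (iii) $\lambda^k=\lambda^{k-1}+\rho(Ax^k+z^k-b)$. $\Phi(x,z,\lambda,\hat x,\hat z)=\mathcal{L}(x,z,\lambda)+\frac{\tau_z}{4}\|z-\hat z\|^2+\sum_t\frac{\tau_x}{4}\|x_t-\hat x_t\|^2_{A_t^\top A_t}$; $\Phi^k=\Phi(x^k,z^k,\lambda^k,x^{k-1},z^{k-1})$ for $k\ge1$; $\Delta z^0=-\tau_z^{-1}(\lambda^0+\theta z^0)$, $\Phi^0=\mathcal{L}(x^0,z^0,\lambda^0)+\frac{\tau_z}{4}\|\Delta z^0\|^2$; $\hat\Phi=\min_{x\in X}\sum_tf_t(x_t)$. *)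

(* Defs.v *)
From HB Require Import structures.
From mathcomp Require Import all_boot all_order all_algebra.
From mathcomp Require Import all_classical all_reals all_analysis.
Set Implicit Arguments. Unset Strict Implicit. Unset Printing Implicit Defensive.
Import Order.TTheory GRing.Theory Num.Theory.
Import numFieldNormedType.Exports.
Local Open Scope classical_set_scope.
Local Open Scope ring_scope.

Definition inner (R : realType) (m : nat) (u v : 'cV[R]_m) : R := (u^T *m v) 0 0.
Definition norm2 (R : realType) (m : nat) (u : 'cV[R]_m) : R := inner u u.
Definition wnorm2 (R : realType) (m : nat) (M : 'M[R]_m) (w : 'cV[R]_m) : R :=
  (w^T *m M *m w) 0 0.

Definition ebasis (R : realType) (n : nat) (i : 'I_n) : 'cV[R]_n := delta_mx i 0.

Definition C2 (R : realType) (n : nat) (f : 'cV[R]_n -> R) : Prop :=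
  continuous f /\
  forall i j : 'I_n,
    (forall x, derivable f x (ebasis R i)) /\
    continuous ('D_(ebasis R i) f) /\
    (forall x, derivable ('D_(ebasis R i) f) x (ebasis R j)) /\
    continuous ('D_(ebasis R j) ('D_(ebasis R i) f)).

Definition Amul (R : realType) (T m : nat) (n : 'I_T -> nat)
  (A : forall t : 'I_T, 'M[R]_(m, n t)) (x : forall t : 'I_T, 'cV[R]_(n t)) : 'cV[R]_m :=
  \sum_(t < T) A t *m x t.

Definition Amul_neq (R : realType) (T m : nat) (n : 'I_T -> nat)
  (A : forall t : 'I_T, 'M[R]_(m, n t)) (x : forall t : 'I_T, 'cV[R]_(n t)) (t : 'I_T)
  : 'cV[R]_m :=
  \sum_(s < T | s != t) A s *m x s.

Definition AugL (R : realType) (T m : nat) (n : 'I_T -> nat)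
  (f : forall t : 'I_T, 'cV[R]_(n t) -> R) (A : forall t : 'I_T, 'M[R]_(m, n t))
  (b : 'cV[R]_m) (rho theta : R)
  (x : forall t : 'I_T, 'cV[R]_(n t)) (z lam : 'cV[R]_m) : R :=
  \sum_(t < T) f t (x t) + theta / 2 * norm2 z
  + inner lam (Amul A x + z - b) + rho / 2 * norm2 (Amul A x + z - b).

Definition Phi (R : realType) (T m : nat) (n : 'I_T -> nat)
  (f : forall t : 'I_T, 'cV[R]_(n t) -> R) (A : forall t : 'I_T, 'M[R]_(m, n t))
  (b : 'cV[R]_m) (rho theta tau_x tau_z : R)
  (x : forall t : 'I_T, 'cV[R]_(n t)) (z lam : 'cV[R]_m)
  (xh : forall t : 'I_T, 'cV[R]_(n t)) (zh : 'cV[R]_m) : R :=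
  AugL f A b rho theta x z lam + tau_z / 4 * norm2 (z - zh)
  + \sum_(t < T) tau_x / 4 * wnorm2 ((A t)^T *m A t) (x t - xh t).

(* Phi^k along the iterate sequences (x^k, z^k, lam^k); Phi^0 uses Delta z^0 *)
Definition PhiSeq (R : realType) (T m : nat) (n : 'I_T -> nat)
  (f : forall t : 'I_T, 'cV[R]_(n t) -> R) (A : forall t : 'I_T, 'M[R]_(m, n t))
  (b : 'cV[R]_m) (rho theta tau_x tau_z : R)
  (x : nat -> forall t : 'I_T, 'cV[R]_(n t)) (z lam : nat -> 'cV[R]_m) (k : nat) : R :=
  match k with
  | k'.+1 => Phi f A b rho theta tau_x tau_z (x k) (z k) (lam k) (x k') (z k')
  | 0%N => AugL f A b rho theta (x 0%N) (z 0%N) (lam 0%N)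
           + tau_z / 4 * norm2 (- tau_z^-1 *: (lam 0%N + theta *: z 0%N))
  end.

(* Phihat = min_{x in X} sum_t f_t(x_t)  (taken as the infimum, which is
   attained under (A1)-(A2)) *)
Definition Phihat (R : realType) (T : nat) (n : 'I_T -> nat)
  (X : forall t : 'I_T, set 'cV[R]_(n t))
  (f : forall t : 'I_T, 'cV[R]_(n t) -> R) : R :=
  inf [set \sum_(t < T) f t (x t) |
       x in [set x : forall t : 'I_T, 'cV[R]_(n t) | forall t, X t (x t)]].

(* objective of the t-th x-subproblem at iteration k (built from iterate k-1) *)
Definition subobj (R : realType) (T m : nat) (n : 'I_T -> nat)
  (f : forall t : 'I_T, 'cV[R]_(n t) -> R) (A : forall t : 'I_T, 'M[R]_(m, n t))
  (b : 'cV[R]_m) (rho tau_x : R)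
  (xp : forall t : 'I_T, 'cV[R]_(n t)) (zp lamp : 'cV[R]_m) (t : 'I_T)
  (y : 'cV[R]_(n t)) : R :=
  f t y + inner lamp (A t *m y)
  + rho / 2 * norm2 (A t *m y + Amul_neq A xp t + zp - b)
  + tau_x / 2 * wnorm2 ((A t)^T *m A t) (y - xp t).

(* Main.v *)
Require Import Defs.
From HB Require Import structures.
From mathcomp Require Import all_boot all_order all_algebra.
From mathcomp Require Import all_classical all_reals all_analysis.
From mathcomp Require Import lra ring.
Import Order.TTheory GRing.Theory Num.Theory.
Import numFieldNormedType.Exports.
Local Open Scope classical_set_scope.
Local Open Scope ring_scope.
Set Implicit Arguments. Unset Strict Implicit. Unset Printing Implicit Defensive.

Section Inner.
Variables (R : realType) (m : nat).
Implicit Types (u v w : 'cV[R]_m).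

Lemma innerE u v : inner u v = \sum_i u i 0 * v i 0.
Proof. by rewrite /inner !mxE; apply: eq_bigr => i _; rewrite mxE. Qed.

Lemma innerC u v : inner u v = inner v u.
Proof. by rewrite !innerE; apply: eq_bigr => i _; rewrite mulrC. Qed.

Lemma innerDl u v w : inner (u + v) w = inner u w + inner v w.
Proof. by rewrite !innerE -big_split; apply: eq_bigr => i _; rewrite mxE mulrDl. Qed.

Lemma innerZl (c : R) u v : inner (c *: u) v = c * inner u v.
Proof. by rewrite !innerE mulr_sumr; apply: eq_bigr => i _; rewrite mxE mulrA. Qed.

Lemma innerNl u v : inner (- u) v = - inner u v.
Proof. by rewrite -scaleN1r innerZl mulN1r. Qed.

Lemma innerBl u v w : inner (u - v) w = inner u w - inner v w.
Proof. by rewrite innerDl innerNl. Qed.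

Lemma innerDr u v w : inner u (v + w) = inner u v + inner u w.
Proof. by rewrite innerC innerDl !(innerC u). Qed.

Lemma innerZr (c : R) u v : inner u (c *: v) = c * inner u v.
Proof. by rewrite innerC innerZl innerC. Qed.

Lemma innerNr u v : inner u (- v) = - inner u v.
Proof. by rewrite innerC innerNl innerC. Qed.

Lemma innerBr u v w : inner u (v - w) = inner u v - inner u w.
Proof. by rewrite innerDr innerNr. Qed.

Lemma inner0r u : inner u 0 = 0.
Proof. by rewrite innerE big1 // => i _; rewrite mxE mulr0. Qed.

Lemma inner_sumr (I : finType) (F : I -> 'cV[R]_m) u :
  inner u (\sum_i F i) = \sum_i inner u (F i).
Proof.
rewrite innerE; under eq_bigr => j _ do rewrite summxE mulr_sumr.
rewrite exchange_big /=; apply: eq_bigr => i _; by rewrite innerE.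
Qed.

Lemma norm2_ge0 u : 0 <= norm2 u.
Proof. rewrite /norm2 innerE; apply: sumr_ge0 => i _; by rewrite -expr2 sqr_ge0. Qed.

Lemma norm2D u v : norm2 (u + v) = norm2 u + 2 * inner u v + norm2 v.
Proof. rewrite /norm2 !innerDl !innerDr (innerC v u); ring. Qed.

Lemma norm2Z (c : R) u : norm2 (c *: u) = c ^+ 2 * norm2 u.
Proof. by rewrite /norm2 innerZl innerZr mulrA expr2. Qed.

Lemma norm2D_le u v : norm2 (u + v) <= 2 * norm2 u + 2 * norm2 v.
Proof.
have := norm2_ge0 (u - v).
rewrite /norm2 !innerDl !innerDr !innerNl !innerNr (innerC v u); lra.
Qed.

Lemma wnorm2_AtA k (M : 'M[R]_(m, k)) (w : 'cV[R]_k) :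
  wnorm2 (M^T *m M) w = norm2 (M *m w).
Proof. by rewrite /wnorm2 /norm2 /inner trmx_mul !mulmxA. Qed.

Lemma norm2_sum (T : nat) (d : 'I_T -> 'cV[R]_m) :
  norm2 (\sum_t d t) = \sum_s \sum_t inner (d s) (d t).
Proof.
rewrite /norm2 inner_sumr; apply: eq_bigr => t _.
by rewrite innerC inner_sumr.
Qed.

Lemma norm2_sum_le (T : nat) (d : 'I_T -> 'cV[R]_m) :
  norm2 (\sum_t d t) <= T%:R * \sum_t norm2 (d t).
Proof.
have H : 0 <= \sum_s \sum_t norm2 (d s - d t).
  by apply: sumr_ge0 => s _; apply: sumr_ge0 => t _; exact: norm2_ge0.
set a := fun t => norm2 (d t).
set c := fun s t => inner (d s) (d t).
have E : \sum_s \sum_t norm2 (d s - d t) =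
     \sum_s (T%:R * a s + \sum_t a t - 2 * \sum_t c s t).
  apply: eq_bigr => s _.
  have -> : \sum_t norm2 (d s - d t) = \sum_t (a s + a t - 2 * c s t).
    apply: eq_bigr => t _.
    rewrite /a /c /norm2 !innerBl !innerBr (innerC (d t) (d s)); ring.
  rewrite !big_split /= sumrN sumr_const card_ord. by rewrite -mulr_sumr -[a s *+ T]mulr_natl.
rewrite E !big_split /= sumrN sumr_const card_ord -!mulr_sumr in H.
rewrite norm2_sum.
change (\sum_s \sum_t c s t <= T%:R * \sum_t a t).
rewrite -mulr_natr in H.
lra.
Qed.

Lemma inner0l u : inner 0 u = 0.
Proof. by rewrite innerC inner0r. Qed.

Lemma core (rho theta tx tz Tn S sdf : R) (r0 D zp e g lp lk rk : 'cV[R]_m) :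
 0 < rho -> 0 < theta -> 0 < tx -> 0 < tz ->
 0 < tx / 4 - (Tn - 1) * rho / 2 ->
 0 < tz / 4 - 2 * (theta + tz) ^+ 2 / rho ->
 sdf + inner lp D + rho * inner r0 D + (rho + tx) / 2 * S <= 0 ->
 norm2 D <= Tn * S -> 0 <= S ->
 rk = r0 + D + e ->
 theta *: (zp + e) + lp + rho *: rk + tz *: e = 0 ->
 lk = lp + rho *: rk ->
 lp = - (theta *: zp) - tz *: g ->
 sdf + theta / 2 * norm2 (zp + e) + inner lk rk + rho / 2 * norm2 rk
   + tz / 4 * norm2 e + tx / 4 * S
  <= theta / 2 * norm2 zp + inner lp r0 + rho / 2 * norm2 r0 + tz / 4 * norm2 g.
Proof.
move=> hr ht htx htz etax etaz Hx HC HS Hrk Hz Hlk Hlp.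
have P1 : sdf + inner lp D + rho * inner r0 D + rho / 2 * norm2 D + tx / 4 * S <= 0.
  have h1 : rho / 2 * norm2 D <= rho / 2 * (Tn * S).
    by apply: ler_wpM2l => //; lra.
  have h2 : (tx / 4 - (Tn - 1) * rho / 2) * S >= 0 by apply: mulr_ge0; lra.
  lra.
(* z optimality tested with e *)
have Ze : theta * inner zp e + theta * norm2 e + inner lp e + rho * inner rk e
          + tz * norm2 e = 0.
  have := congr1 (fun v => inner v e) Hz; rewrite /= inner0l.
  by rewrite !innerDl !innerZl innerDl /norm2 => h; lra.
have Erk : rho *: rk = tz *: g - (theta + tz) *: e.
  apply/matrixP => i j; move/matrixP: Hz => /(_ i j); rewrite Hlp !mxE.
  move=> h; lra.
have Hq : rho ^+ 2 * norm2 rk <= 2 * tz ^+ 2 * norm2 g + 2 * (theta + tz) ^+ 2 * norm2 e.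
  rewrite -norm2Z Erk.
  have := norm2D_le (tz *: g) (- ((theta + tz) *: e)).
  by rewrite -scaleNr !norm2Z sqrrN => h; lra.
set K := 2 * (theta + tz) ^+ 2 / rho.
set K2 := 2 * tz ^+ 2 / rho.
have B : rho * norm2 rk <= K * norm2 e + K2 * norm2 g.
  rewrite -(ler_pM2l hr).
  have -> : rho * (K * norm2 e + K2 * norm2 g)
          = 2 * tz ^+ 2 * norm2 g + 2 * (theta + tz) ^+ 2 * norm2 e.
    rewrite /K /K2; field; lra.
  by rewrite mulrA -expr2.
have KK2 : K2 <= K.
  rewrite /K /K2 ler_pM2r ?invr_gt0 //.
  have : 0 <= theta * (theta + 2 * tz) by apply: mulr_ge0; lra.
  rewrite !expr2; lra.
have C1 : K * norm2 e <= tz / 4 * norm2 e by apply: ler_wpM2r; [exact: norm2_ge0| rewrite /K; lra].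
have C2 : K2 * norm2 g <= tz / 4 * norm2 g by apply: ler_wpM2r; [exact: norm2_ge0| move: KK2; rewrite /K /K2 => ?; lra].
have Ne0 := norm2_ge0 e.
have Ng0 := norm2_ge0 g.
have He : (theta + rho) / 2 * norm2 e >= 0 by apply: mulr_ge0; lra.
have E1 : norm2 (zp + e) = norm2 zp + 2 * inner zp e + norm2 e by exact: norm2D.
have E2 : inner lk rk = inner lp r0 + inner lp D + inner lp e + rho * norm2 rk.
  by rewrite Hlk innerDl innerZl {1}Hrk !innerDr.
have E3 : norm2 rk = norm2 r0 + norm2 D + norm2 e + 2 * inner r0 D + 2 * inner r0 e
                     + 2 * inner D e.
  rewrite Hrk !norm2D innerDl; ring.
have E4 : inner rk e = inner r0 e + inner D e + norm2 e.
  by rewrite Hrk !innerDl.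
have E3' : rho / 2 * norm2 rk = rho / 2 * (norm2 r0 + norm2 D + norm2 e
   + 2 * inner r0 D + 2 * inner r0 e + 2 * inner D e) by rewrite E3.
have E4' : rho * inner rk e = rho * (inner r0 e + inner D e + norm2 e) by rewrite E4.
have E1' : theta / 2 * norm2 (zp + e) = theta / 2 * (norm2 zp + 2 * inner zp e + norm2 e)
  by rewrite E1.
have Hte : 0 <= tz * norm2 e by apply: mulr_ge0; lra.
rewrite E2.
lra.
Qed.

Lemma lower (rho theta tz : R) (zk e rk lk : 'cV[R]_m) :
 0 < rho -> 0 < theta -> 0 < tz ->
 0 < tz / 4 - 2 * (theta + tz) ^+ 2 / rho ->
 lk = - (theta *: zk) - tz *: e ->
 0 <= theta / 2 * norm2 zk + inner lk rk + rho / 2 * norm2 rk + tz / 4 * norm2 e.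
Proof.
move=> hr ht htz etaz Hl.
have e1 : 0 < rho * tz / 4 - 2 * (theta + tz) ^+ 2.
  have -> : rho * tz / 4 - 2 * (theta + tz) ^+ 2
          = rho * (tz / 4 - 2 * (theta + tz) ^+ 2 / rho) by field; lra.
  exact: mulr_gt0.
have e2 : 0 < (rho / 4 - 4 * theta - 2 * tz) * tz.
  have : 0 <= theta ^+ 2 by exact: sqr_ge0.
  rewrite !expr2 in e1 *; move=> h; lra.
have Hr : 16 * theta + 8 * tz < rho.
  by move: e2; rewrite pmulr_lgt0 // => h; lra.
have F1 : 0 <= rho ^+ 2 * norm2 rk + 2 * (rho * inner lk rk) + norm2 lk.
  have := norm2_ge0 (rho *: rk + lk).
  by rewrite norm2D norm2Z innerZl innerC => h; lra.
have F2 : norm2 lk <= 2 * theta ^+ 2 * norm2 zk + 2 * tz ^+ 2 * norm2 e.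
  have := norm2D_le (- (theta *: zk)) (- (tz *: e)).
  by rewrite -Hl -!scaleNr !norm2Z !sqrrN => h; lra.
have F3 : 0 <= theta * (rho - 2 * theta) * norm2 zk.
  by apply: mulr_ge0; [apply: mulr_ge0; lra | exact: norm2_ge0].
have F4 : 0 <= tz * (rho / 2 - 2 * tz) * norm2 e.
  by apply: mulr_ge0; [apply: mulr_ge0; lra | exact: norm2_ge0].
rewrite -(pmulr_rge0 _ hr).
rewrite !expr2 in F1 F2; lra.
Qed.

Lemma vec_r (a p nn zz bb : 'cV[R]_m) :
  a + nn + zz - bb = (p + nn + zz - bb) + (a - p).
Proof. by apply/matrixP => i j; rewrite !mxE; ring. Qed.

Lemma vec_rk (ak ap zk zp bb : 'cV[R]_m) :
  ak + zk - bb = (ap + zp - bb) + (ak - ap) + (zk - zp).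
Proof. by apply/matrixP => i j; rewrite !mxE; ring. Qed.

Lemma lam_id (rho theta tz : R) (zk zp lp lk a bb : 'cV[R]_m) :
  0 < rho -> 0 < theta -> 0 < tz ->
  zk = (tz + rho + theta)^-1 *: (tz *: zp - rho *: (a - bb) - lp) ->
  lk = lp + rho *: (a + zk - bb) ->
  lk = - (theta *: zk) - tz *: (zk - zp) /\
  theta *: (zp + (zk - zp)) + lp + rho *: (a + zk - bb) + tz *: (zk - zp) = 0.
Proof.
move=> hr ht htz Hz Hl; subst lk zk; split; apply/matrixP => i j; rewrite !mxE;
  field; lra.
Qed.

End Inner.

Lemma fbound (R : realType) (n : nat) (X : set 'cV[R]_n) (f : 'cV[R]_n -> R) :
  compact X -> continuous f -> exists M, forall y, X y -> - M <= f y.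
Proof.
move=> cX cf.
have cK : compact (f @` X) by apply: continuous_compact => //; exact: continuous_subspaceT.
have [M [_ HM]] := compact_bounded cK.
exists (M + 1) => y Xy.
have : `|f y| <= M + 1.
  by apply: (HM (M + 1)); [rewrite ltrDl | exists y].
by rewrite ler_norml => /andP[].
Qed.

Lemma Phihat_le (R : realType) (T : nat) (n : 'I_T -> nat)
  (X : forall t : 'I_T, set 'cV[R]_(n t))
  (f : forall t : 'I_T, 'cV[R]_(n t) -> R) (y : forall t, 'cV[R]_(n t)) :
  (forall t, X t !=set0 /\ compact (X t)) -> (forall t, C2 (f t)) ->
  (forall t, X t (y t)) -> Phihat X f <= \sum_t f t (y t).
Proof.
move=> HX Hf Hy.
have /choice [M HM] : forall t, exists M, forall v, X t v -> - M <= f t v.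
  move=> t; apply: fbound; [exact: (HX t).2 | exact: (Hf t).1].
apply: ge_inf; last by exists y.
exists (\sum_t - M t) => _ [w Hw <-].
by apply: ler_sum => t _; apply: HM; apply: Hw.
Qed.

Theorem lemma3 (R : realType) (T m : nat) (n : 'I_T -> nat)
  (X : forall t : 'I_T, set 'cV[R]_(n t))
  (f : forall t : 'I_T, 'cV[R]_(n t) -> R)
  (A : forall t : 'I_T, 'M[R]_(m, n t)) (b : 'cV[R]_m)
  (rho theta tau_x tau_z : R)
  (x : nat -> forall t : 'I_T, 'cV[R]_(n t)) (z lam : nat -> 'cV[R]_m) :
  (0 < T)%N ->
  (* (A1) *)
  (forall t, X t !=set0 /\ compact (X t)) ->
  (* (A2) *)
  (forall t, C2 (f t)) ->
  (* (A3) *)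
  row_free (\mxrow_(t < T) A t) ->
  (* (A4) *)
  (exists x0 : forall t : 'I_T, 'cV[R]_(n t),
      (forall t, X t (x0 t)) /\ Amul A x0 = b) ->
  (* parameters *)
  0 < rho -> 0 < theta -> 0 < tau_x -> 0 < tau_z ->
  0 < tau_x / 4 - (T%:R - 1) * rho / 2 ->
  0 < tau_z / 4 - 2 * (theta + tau_z) ^+ 2 / rho ->
  (* initial point *)
  (forall t, X t (x 0%N t)) ->
  (* Jacobi scheme, k >= 1 *)
  (forall k : nat, (1 <= k)%N ->
     (* (i) x_t^k: local minimizer of the t-th subproblem over X_t, with value
        not exceeding that of the warm start x_t^{k-1} *)
     (forall t : 'I_T,
        X t (x k t) /\
        (\forall y \near x k t, X t y ->
           subobj f A b rho tau_x (x k.-1) (z k.-1) (lam k.-1) y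
           >= subobj f A b rho tau_x (x k.-1) (z k.-1) (lam k.-1) (x k t)) /\
        subobj f A b rho tau_x (x k.-1) (z k.-1) (lam k.-1) (x k t)
        <= subobj f A b rho tau_x (x k.-1) (z k.-1) (lam k.-1) (x k.-1 t)) /\
     (* (ii) *)
     z k = (tau_z + rho + theta)^-1 *:
             (tau_z *: z k.-1 - rho *: (Amul A (x k) - b) - lam k.-1) /\
     (* (iii) *)
     lam k = lam k.-1 + rho *: (Amul A (x k) + z k - b)) ->
  forall k : nat, (1 <= k)%N ->
    PhiSeq f A b rho theta tau_x tau_z x z lam k
      <= PhiSeq f A b rho theta tau_x tau_z x z lam k.-1 /\
    Phihat X f <= PhiSeq f A b rho theta tau_x tau_z x z lam k.
Proof.

move=> T0 HX Hf _ _ hr ht htx htz etax etaz HX0 Hk k k1.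
case: k k1 => // k' _.
have [Hi [Hii Hiii]] := Hk k'.+1 isT.
rewrite /= in Hi Hii Hiii.
have [Elk Hz] := lam_id hr ht htz Hii Hiii.
pose d := fun t => A t *m (x k'.+1 t - x k' t).
pose S := \sum_t norm2 (d t).
have HS : 0 <= S by apply: sumr_ge0 => t _; exact: norm2_ge0.
have PhiE : PhiSeq f A b rho theta tau_x tau_z x z lam k'.+1 =
   \sum_t f t (x k'.+1 t) + (theta / 2 * norm2 (z k'.+1)
   + inner (lam k'.+1) (Amul A (x k'.+1) + z k'.+1 - b)
   + rho / 2 * norm2 (Amul A (x k'.+1) + z k'.+1 - b)
   + tau_z / 4 * norm2 (z k'.+1 - z k')) + tau_x / 4 * S.
  have Hw : \sum_t tau_x / 4 * wnorm2 ((A t)^T *m A t) (x k'.+1 t - x k' t)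
           = tau_x / 4 * S.
    by rewrite /S mulr_sumr; apply: eq_bigr => t _; rewrite wnorm2_AtA.
  rewrite /PhiSeq /Phi /AugL Hw; ring.
have HSx : 0 <= tau_x / 4 * S by apply: mulr_ge0 => //; lra.
split; last first.
  rewrite PhiE.
  have := Phihat_le HX Hf (fun t => (Hi t).1).
  have := lower (Amul A (x k'.+1) + z k'.+1 - b) hr ht htz etaz Elk.
  lra.
have [g [Hg1 Hg2]] : exists g,
   AugL f A b rho theta (x k') (z k') (lam k') + tau_z / 4 * norm2 g
     <= PhiSeq f A b rho theta tau_x tau_z x z lam k' /\
   lam k' = - (theta *: z k') - tau_z *: g.
  case: k' {Hi Hii Hiii Elk Hz PhiE d S HS HSx} => [|k''].
    exists (- tau_z^-1 *: (lam 0%N + theta *: z 0%N)); split; first by [].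
    by apply/matrixP => i j; rewrite !mxE; field; lra.
  have [_ [Hii' Hiii']] := Hk k''.+1 isT.
  rewrite /= in Hii' Hiii'.
  have [Elk' _] := lam_id hr ht htz Hii' Hiii'.
  exists (z k''.+1 - z k''); split => //.
  rewrite /PhiSeq /Phi lerDl.
  apply: sumr_ge0 => t _; apply: mulr_ge0; first lra.
  by rewrite wnorm2_AtA; exact: norm2_ge0.
set r0 := Amul A (x k') + z k' - b.
have HD : Amul A (x k'.+1) - Amul A (x k') = \sum_t d t.
  by rewrite /Amul -sumrB; apply: eq_bigr => t _; rewrite /d mulmxBr.
have Hsub : forall t : 'I_T,
   subobj f A b rho tau_x (x k') (z k') (lam k') (x k'.+1 t)
   - subobj f A b rho tau_x (x k') (z k') (lam k') (x k' t)
   = f t (x k'.+1 t) - f t (x k' t) + inner (lam k') (d t)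
     + rho * inner r0 (d t) + (rho + tau_x) / 2 * norm2 (d t).
  move=> t.
  have Hap : Amul A (x k') = A t *m x k' t + Amul_neq A (x k') t.
    by rewrite /Amul (bigD1 t).
  have E1 : A t *m x k'.+1 t + Amul_neq A (x k') t + z k' - b = r0 + d t.
    by rewrite /r0 Hap /d mulmxBr; apply: vec_r.
  have E2 : A t *m x k' t + Amul_neq A (x k') t + z k' - b = r0.
    by rewrite /r0 Hap.
  rewrite /subobj E1 E2 subrr !wnorm2_AtA mulmx0 /d mulmxBr norm2D innerBr.
  rewrite /norm2 inner0r !innerBr; lra.
have Hx : \sum_t (f t (x k'.+1 t) - f t (x k' t)) + inner (lam k') (\sum_t d t)
     + rho * inner r0 (\sum_t d t) + (rho + tau_x) / 2 * S <= 0.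
  have : \sum_t (subobj f A b rho tau_x (x k') (z k') (lam k') (x k'.+1 t)
   - subobj f A b rho tau_x (x k') (z k') (lam k') (x k' t)) <= 0.
    by apply: sumr_le0 => t _; rewrite subr_le0; exact: (Hi t).2.2.
  under eq_bigr => t _ do rewrite Hsub.
  by rewrite !big_split /= !inner_sumr -!mulr_sumr.
have HC : norm2 (\sum_t d t) <= T%:R * S by exact: norm2_sum_le.
have Hrk := vec_rk (Amul A (x k'.+1)) (Amul A (x k')) (z k'.+1) (z k') b.
rewrite -/r0 HD in Hrk.
have := core hr ht htx htz etax etaz Hx HC HS Hrk Hz Hiii Hg2.
have Ez : z k' + (z k'.+1 - z k') = z k'.+1 by rewrite addrC subrK.
rewrite Ez PhiE /=.
move: Hg1; rewrite /AugL -/r0 sumrB.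
lra.
Qed.
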